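(* Let $X$ be a compact nonpositively curved cube complex and $(\tilde Y,\phi)$ a quasiline in $\tilde X$. Then for each hyperplane $H$ of $\tilde Y$: (1) $H$ is trivial if and only if $\operatorname{diam}(H)=\infty$; (2) $H$ is half-essential if and only if it has a compact halfspace; (3) $H$ is essential if and only if $\operatorname{diam}(H)<\infty$ and both halfspaces of $H$ are noncompact.
   Context: $\tilde X$ is the universal cover of $X$. A quasiline in $\tilde X$ is a pair $(\tilde Y,\phi)$ with $\tilde Y\subset\tilde X$ a convex subcomplex and $\phi\in\pi_1X$ nontrivial such that $\langle\phi\rangle$ acts cocompactly on $\tilde Y$. Hyperplanes of $\tilde Y$ and their two halfspaces (components of the complement of the open carrier) are taken in the CAT(0) cube complex $\tilde Y$. A halfspace of $H$ is deep if it contains points arbitrarily far from $H$, shallow otherwise. $H$ is essential if both halfspaces are deep, trivial if both are shallow, half-essential if exactly one is deep. *)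

(* Defs.v *)
(* Combinatorial model of CAT(0) cube complexes via their
   1-skeleta (median graphs, Chepoi/Roller). *)
From Stdlib Require Import List Arith.

Inductive walk {V : Type} (adj : V -> V -> Prop) : V -> V -> nat -> Prop :=
| walk0 : forall x, walk adj x x 0
| walkS : forall x y z n, adj x y -> walk adj y z n -> walk adj x z (S n).

Definition is_dist {V : Type} (adj : V -> V -> Prop) (x y : V) (n : nat) : Prop :=
  walk adj x y n /\ forall k, walk adj x y k -> n <= k.

Definition between {V : Type} (adj : V -> V -> Prop) (x m y : V) : Prop :=
  exists p q n, is_dist adj x m p /\ is_dist adj m y q /\ is_dist adj x y n /\ p + q = n.

Definition is_median {V : Type} (adj : V -> V -> Prop) (x y z m : V) : Prop :=
  between adj x m y /\ between adj y m z /\ between adj x m z.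

(* median graph = 1-skeleton of a CAT(0) cube complex *)
Definition median_graph {V : Type} (adj : V -> V -> Prop) : Prop :=
  (forall x y, adj x y -> adj y x) /\
  (forall x, ~ adj x x) /\
  (forall x y, exists n, walk adj x y n) /\
  (forall x y z, exists m, is_median adj x y z m /\
                           forall m', is_median adj x y z m' -> m' = m).

Definition locally_finite {V : Type} (adj : V -> V -> Prop) : Prop :=
  forall x, exists l : list V, forall y, adj x y -> In y l.

Record group := Group {
  gcar :> Type;
  gmul : gcar -> gcar -> gcar;
  gone : gcar;
  ginv : gcar -> gcar;
  gmulA : forall x y z, gmul x (gmul y z) = gmul (gmul x y) z;
  gmul1 : forall x, gmul gone x = x;
  gmulV : forall x, gmul (ginv x) x = gone }.

Fixpoint gpow (G : group) (g : G) (n : nat) : G :=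
  match n with 0 => gone G | S k => gmul G g (gpow G g k) end.

Definition graph_action {V : Type} (adj : V -> V -> Prop) (G : group)
    (act : G -> V -> V) : Prop :=
  (forall v, act (gone G) v = v) /\
  (forall g h v, act (gmul G g h) v = act g (act h v)) /\
  (forall g x y, adj x y <-> adj (act g x) (act g y)).

(* Data of a compact nonpositively curved cube complex X:
   its universal cover Xtilde (given by its 1-skeleton, a median graph)
   together with pi_1 X = G acting by deck transformations, i.e. freely
   and cocompactly by cubical automorphisms, X = Xtilde / G.  Freeness on
   the whole complex = free on vertices + torsion-free (a cube stabiliser
   would be a finite-order element).  Compactness of X = local finiteness
   + finitely many G-orbits of vertices. *)
Definition compact_npc_universal_cover {V : Type} (adj : V -> V -> Prop)
    (G : group) (act : G -> V -> V) : Prop :=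
  median_graph adj /\
  locally_finite adj /\
  graph_action adj G act /\
  (forall g v, act g v = v -> g = gone G) /\
  (forall g n, 0 < n -> gpow G g n = gone G -> g = gone G) /\
  (exists reps : list V, forall v, exists g r, In r reps /\ v = act g r).

Definition convex_sub {V : Type} (adj : V -> V -> Prop) (Y : V -> Prop) : Prop :=
  forall x y m, Y x -> Y y -> between adj x m y -> Y m.

Definition quasiline {V : Type} (adj : V -> V -> Prop) (G : group)
    (act : G -> V -> V) (Y : V -> Prop) (phi : G) : Prop :=
  phi <> gone G /\
  (exists y, Y y) /\
  convex_sub adj Y /\
  (forall y, Y y -> Y (act phi y)) /\
  (forall y, Y y -> exists x, Y x /\ act phi x = y) /\
  (* <phi> acts cocompactly on Y: finitely many <phi>-orbits (Z-orbits) *)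
  (exists reps : list V, forall y, Y y ->
     exists r n, In r reps /\
       (y = Nat.iter n (act phi) r \/ r = Nat.iter n (act phi) y)).

(* ---------- hyperplanes of Y (Djokovic-Winkler classes of edges) ---------- *)

Definition theta {V : Type} (adj : V -> V -> Prop) (a b c d : V) : Prop :=
  exists p q r s, is_dist adj a c p /\ is_dist adj b d q /\
                  is_dist adj a d r /\ is_dist adj b c s /\ p + q <> r + s.

(* v is a vertex of the carrier of the hyperplane of Y dual to the edge (a,b) *)
Definition hp_vertex {V : Type} (adj : V -> V -> Prop) (Y : V -> Prop)
    (a b v : V) : Prop :=
  exists c d, Y c /\ Y d /\ adj c d /\ theta adj a b c d /\ (v = c \/ v = d).

Definition halfspace {V : Type} (adj : V -> V -> Prop) (Y : V -> Prop)
    (a b v : V) : Prop :=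
  Y v /\ exists p q, is_dist adj v a p /\ is_dist adj v b q /\ p < q.

Definition deep_halfspace {V : Type} (adj : V -> V -> Prop) (Y : V -> Prop)
    (a b : V) : Prop :=
  forall n, exists v, halfspace adj Y a b v /\
    forall u p, hp_vertex adj Y a b u -> is_dist adj v u p -> n <= p.

Definition essential_hp {V : Type} adj (Y : V -> Prop) (a b : V) : Prop :=
  deep_halfspace adj Y a b /\ deep_halfspace adj Y b a.
Definition trivial_hp {V : Type} adj (Y : V -> Prop) (a b : V) : Prop :=
  ~ deep_halfspace adj Y a b /\ ~ deep_halfspace adj Y b a.
Definition half_essential_hp {V : Type} adj (Y : V -> Prop) (a b : V) : Prop :=
  (deep_halfspace adj Y a b /\ ~ deep_halfspace adj Y b a) \/
  (~ deep_halfspace adj Y a b /\ deep_halfspace adj Y b a).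

Definition finite_diam_hp {V : Type} (adj : V -> V -> Prop) (Y : V -> Prop)
    (a b : V) : Prop :=
  exists n, forall u w p, hp_vertex adj Y a b u -> hp_vertex adj Y a b w ->
    is_dist adj u w p -> p <= n.

(* compact halfspace (locally finite complex): finitely many vertices *)
Definition compact_halfspace {V : Type} (adj : V -> V -> Prop) (Y : V -> Prop)
    (a b : V) : Prop :=
  exists l : list V, forall v, halfspace adj Y a b v -> In v l.

(* Main.v *)
Require Import Defs.
From Stdlib Require Import List Arith Lia Classical ClassicalEpsilon FinFun.
Import ListNotations.

Lemma ex_min (P : nat -> Prop) n : P n -> exists m, P m /\ forall k, P k -> m <= k.
Proof.
  induction n as [n IH] using (well_founded_induction lt_wf).
  intros Pn. destruct (classic (exists k, k < n /\ P k)) as [[k [Hk Pk]]|H].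
  - exact (IH k Hk Pk).
  - exists n. split; [exact Pn|]. intros k Pk. destruct (le_lt_dec n k); [assumption|].
    exfalso; apply H; eauto.
Qed.

Lemma pigeon_inj {A} (f : nat -> A) (l : list A) :
  (forall i j, f i = f j -> i = j) -> (forall k, In (f k) l) -> False.
Proof.
  intros Hi Hl.
  assert (ND : NoDup (map f (seq 0 (S (length l))))).
  { apply Injective_map_NoDup; [intros x y; apply Hi| apply seq_NoDup]. }
  assert (Inc : incl (map f (seq 0 (S (length l)))) l).
  { intros x Hx. apply in_map_iff in Hx. destruct Hx as [k [<- _]]. apply Hl. }
  pose proof (NoDup_incl_length ND Inc) as H. rewrite length_map, length_seq in H. lia.
Qed.

Lemma pigeon {A} (f : nat -> A) l :
  (forall k, In (f k) l) -> exists i j, i < j /\ f i = f j.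
Proof.
  intros Hl. apply NNPP; intro H. apply (pigeon_inj f l); [|exact Hl].
  intros i j E. destruct (lt_eq_lt_dec i j) as [[Hlt|Heq]|Hgt]; auto; exfalso; apply H.
  - exists i, j; auto.
  - exists j, i; auto.
Qed.

Lemma sum_bound {A} (f : A -> nat) l x :
  In x l -> f x <= fold_right (fun y acc => f y + acc) 0 l.
Proof. induction l as [|y l IH]; simpl; [tauto|]. intros [<-|H]; [lia|]. specialize (IH H); lia. Qed.

Section S.
Context {V : Type} (adj : V -> V -> Prop) (G : group) (act : G -> V -> V)
  (HX : compact_npc_universal_cover adj G act)
  (Y : V -> Prop) (phi : G) (HQ : quasiline adj G act Y phi).

Lemma adj_sym x y : adj x y -> adj y x.
Proof. destruct HX as [[H _] _]. apply H. Qed.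
Lemma adj_irr x : ~ adj x x.
Proof. destruct HX as [[_ [H _]] _]. apply H. Qed.
Lemma conn x y : exists n, walk adj x y n.
Proof. destruct HX as [[_ [_ [H _]]] _]. apply H. Qed.
Lemma med_ex x y z : exists m, is_median adj x y z m /\ forall m', is_median adj x y z m' -> m' = m.
Proof. destruct HX as [[_ [_ [_ H]]] _]. apply H. Qed.
Lemma lf : locally_finite adj.
Proof. destruct HX as [_ [H _]]. exact H. Qed.
Lemma act_id v : act (gone G) v = v.
Proof. destruct HX as [_ [_ [[H _] _]]]. apply H. Qed.
Lemma act_mul g h v : act (gmul G g h) v = act g (act h v).
Proof. destruct HX as [_ [_ [[_ [H _]] _]]]. apply H. Qed.
Lemma act_adj g x y : adj x y <-> adj (act g x) (act g y).
Proof. destruct HX as [_ [_ [[_ [_ H]] _]]]. apply H. Qed.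
Lemma act_free g v : act g v = v -> g = gone G.
Proof. destruct HX as [_ [_ [_ [H _]]]]. apply H. Qed.
Lemma tfree g n : 0 < n -> gpow G g n = gone G -> g = gone G.
Proof. destruct HX as [_ [_ [_ [_ [H _]]]]]. apply H. Qed.

Lemma dist_ex x y : exists n, is_dist adj x y n.
Proof.
  destruct (conn x y) as [n Hn]. destruct (ex_min (fun k => walk adj x y k) n Hn) as [m [Hm Hmin]].
  exists m. split; auto.
Qed.

Definition D x y : nat := proj1_sig (constructive_indefinite_description _ (dist_ex x y)).
Lemma D_spec x y : is_dist adj x y (D x y).
Proof. unfold D. destruct (constructive_indefinite_description _ _) as [n Hn]. exact Hn. Qed.
Lemma D_min x y k : walk adj x y k -> D x y <= k.
Proof. intro H. apply (proj2 (D_spec x y)). exact H. Qed.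
Lemma D_walk x y : walk adj x y (D x y).
Proof. apply (proj1 (D_spec x y)). Qed.
Lemma is_dist_D x y n : is_dist adj x y n <-> n = D x y.
Proof.
  split.
  - intros [W M]. pose proof (M _ (D_walk x y)). pose proof (D_min _ _ _ W). lia.
  - intros ->. apply D_spec.
Qed.

Lemma walk_app x y z n m : walk adj x y n -> walk adj y z m -> walk adj x z (n + m).
Proof.
  induction 1 as [x|x y' z' n A W IH]; intros W2; simpl; auto.
  eapply walkS; eauto.
Qed.
Lemma walk_rev x y n : walk adj x y n -> walk adj y x n.
Proof.
  induction 1 as [x|x y' z' n A W IH]; [constructor|].
  replace (S n) with (n + 1) by lia. eapply walk_app; [exact IH|].
  eapply walkS; [apply adj_sym; exact A| constructor].
Qed.
Lemma D_sym x y : D x y = D y x.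
Proof.
  pose proof (D_min _ _ _ (walk_rev _ _ _ (D_walk x y))).
  pose proof (D_min _ _ _ (walk_rev _ _ _ (D_walk y x))). lia.
Qed.
Lemma D_tri x y z : D x z <= D x y + D y z.
Proof. apply D_min. eapply walk_app; apply D_walk. Qed.
Lemma D_xx x : D x x = 0.
Proof. pose proof (D_min _ _ _ (walk0 adj x)). lia. Qed.
Lemma D_eq0 x y : D x y = 0 -> x = y.
Proof. intro H. pose proof (D_walk x y) as W. rewrite H in W. inversion W; auto. Qed.
Lemma D_adj x y : adj x y -> D x y = 1.
Proof.
  intro A. assert (D x y <= 1) by (apply D_min; eapply walkS; [exact A|constructor]).
  destruct (D x y) eqn:E; [|lia]. apply D_eq0 in E; subst. exfalso; exact (adj_irr _ A).
Qed.
Lemma D_1adj x y : D x y = 1 -> adj x y.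
Proof.
  intro H. pose proof (D_walk x y) as W. rewrite H in W. inversion W; subst.
  match goal with H : walk _ _ _ 0 |- _ => inversion H; subst end. assumption.
Qed.
Lemma D_step x y n : D x y = S n -> exists z, adj x z /\ D z y = n.
Proof.
  intro H. pose proof (D_walk x y) as W. rewrite H in W. inversion W as [|x' z y' n' A W' E1 E2 E3]; subst.
  exists z. split; auto. pose proof (D_min _ _ _ W'). pose proof (D_tri x z y). rewrite (D_adj _ _ A) in *. lia.
Qed.
Lemma D_adj_lip x y v : adj x y -> D x v <= S (D y v).
Proof. intro A. pose proof (D_tri x y v). rewrite (D_adj _ _ A) in H. lia. Qed.

Lemma between_iff x m y : Defs.between adj x m y <-> D x m + D m y = D x y.
Proof.
  split.
  - intros (p & q & n & H1 & H2 & H3 & E). apply is_dist_D in H1, H2, H3. subst. auto.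
  - intro E. exists (D x m), (D m y), (D x y). repeat split; try apply D_spec. auto.
Qed.

Lemma med x y z : exists m, (D x m + D m y = D x y /\ D y m + D m z = D y z /\ D x m + D m z = D x z)
  /\ forall m', (D x m' + D m' y = D x y /\ D y m' + D m' z = D y z /\ D x m' + D m' z = D x z) -> m' = m.
Proof.
  destruct (med_ex x y z) as [m [[B1 [B2 B3]] U]]. exists m.
  rewrite between_iff in B1, B2, B3. split; [auto|].
  intros m' (E1 & E2 & E3). apply U. repeat split; apply between_iff; auto.
Qed.


Lemma bip a b v : adj a b -> D v a <> D v b.
Proof.
  intros A E. destruct (med a b v) as [m [(E1 & E2 & E3) _]].
  rewrite (D_adj _ _ A) in E1.
  assert (D a m = 0 \/ D m b = 0) as [Z|Z] by lia; apply D_eq0 in Z; subst m.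
  - rewrite (D_sym v a), (D_sym v b) in E. rewrite (D_sym b a), (D_adj _ _ A) in E2. lia.
  - rewrite (D_sym v a), (D_sym v b) in E. rewrite (D_adj _ _ A) in E3. lia.
Qed.

Lemma adj_cases a b v : adj a b -> D v b = S (D v a) \/ D v a = S (D v b).
Proof.
  intro A. pose proof (bip a b v A). pose proof (D_tri v a b). pose proof (D_tri v b a).
  rewrite (D_adj _ _ A) in *. rewrite (D_adj _ _ (adj_sym _ _ A)) in *. lia.
Qed.

Lemma dist2 z x y : adj z x -> adj z y -> x <> y -> D x y = 2.
Proof.
  intros A1 A2 N. pose proof (D_tri x z y). rewrite (D_sym x z), (D_adj _ _ A1), (D_adj _ _ A2) in H.
  destruct (D x y) as [|[|[|k]]] eqn:E; try lia.
  - apply D_eq0 in E; contradiction.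
  - apply D_1adj in E. exfalso. apply (bip x y z E). rewrite (D_sym z x), (D_sym z y) in *.
    rewrite D_sym, (D_adj _ _ A1), D_sym, (D_adj _ _ A2). reflexivity.
Qed.

Lemma RC k : forall a b x x1 y, adj a b -> adj x x1 -> D x a = k -> D x b = S k ->
  D x1 b = k -> D x1 a = S k -> D y b = S (D y a) -> S (D x1 y) = D x y -> False.
Proof.
  induction k as [|k IH]; intros a b x x1 y Aab Ax E1 E2 E3 E4 Ey Exy.
  - apply D_eq0 in E1. apply D_eq0 in E3. subst. rewrite (D_sym y a), (D_sym y b) in Ey. lia.
  - destruct (D_step _ _ _ E3) as [x2 [A12 E5]].
    assert (E6 : D x2 a = S k).
    { pose proof (D_tri x2 b a). pose proof (D_adj_lip x1 x2 a A12). rewrite (D_adj _ _ (adj_sym _ _ Aab)) in *. lia. }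
    assert (Dxx2 : D x x2 = 2).
    { apply (dist2 x1). apply adj_sym; auto. auto. intro; subst. lia. }
    destruct (med x x2 a) as [z [(M1 & M2 & M3) _]].
    assert (Hxz : D x z = 1) by (rewrite (D_sym x2 z) in *; lia).
    assert (Hx2z : D x2 z = 1) by (rewrite (D_sym x2 z) in *; lia).
    assert (Hza : D z a = k) by lia.
    assert (Azx : adj z x) by (apply adj_sym, D_1adj; auto).
    assert (Azx2 : adj z x2) by (apply adj_sym, D_1adj; auto).
    assert (Hzb : D z b = S k).
    { pose proof (D_adj_lip x z b (adj_sym _ _ Azx)). pose proof (D_tri z a b). rewrite (D_adj _ _ Aab) in *. lia. }
    assert (Cx2 := adj_cases x1 x2 y A12).
    assert (Cz := adj_cases x z y (adj_sym _ _ Azx)).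
    assert (Bz : D z y <= S (D x2 y)) by (apply D_adj_lip; auto).
    rewrite (D_sym x2 y), (D_sym x1 y), (D_sym z y), (D_sym x y) in *.
    destruct (classic (S (D y x2) = D y z)) as [Good|Bad].
    + apply (IH a b z x2 y Aab Azx2 Hza Hzb E5 E6 Ey). rewrite (D_sym x2 y), (D_sym z y). exact Good.
    + assert (Ezy : D y z = D y x1) by lia.
      assert (Dzx1 : D z x1 = 2).
      { apply (dist2 x). apply adj_sym; auto. auto. intro; subst. lia. }
      destruct (med z x1 y) as [w [(W1 & W2 & W3) _]].
      rewrite (D_sym z y), (D_sym x1 y), (D_sym w x1) in *.
      assert (Hzw : D z w = 1) by lia.
      assert (Hx1w : D x1 w = 1) by lia.
      assert (Azw : adj z w) by (apply D_1adj; auto).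
      assert (Ax1w : adj x1 w) by (apply D_1adj; auto).
      assert (Dxw : D x w = 2).
      { apply (dist2 z); auto. intro; subst. rewrite (D_sym w y) in W2. lia. }
      assert (Dx2w : D x2 w = 2).
      { apply (dist2 z); auto. intro; subst. rewrite (D_sym w y) in W2. lia. }
      destruct (med x x2 w) as [mm [_ U]].
      assert (z = mm).
      { apply U. rewrite (D_sym z x2), Hxz, Hx2z, Hzw, Dxx2, Dxw, Dx2w. auto. }
      assert (x1 = mm).
      { apply U. rewrite (D_sym x2 x1), (D_adj _ _ Ax), (D_adj _ _ A12), Hx1w, Dxx2, Dxw, Dx2w. auto. }
      subst. lia.
Qed.

Definition W a b v := D v a < D v b.

Lemma FT a b c d : adj a b -> adj c d -> W a b c -> W b a d -> forall v, W a b v -> W c d v.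
Proof.
  unfold W. intros Aab Acd Hc Hd v Hv. apply NNPP; intro N.
  pose proof (adj_cases c d v Acd).
  pose proof (adj_cases a b c Aab). pose proof (adj_cases a b d Aab).
  pose proof (adj_cases c d a Acd). pose proof (adj_cases c d b Acd).
  pose proof (adj_cases a b v Aab).
  rewrite (D_sym a c), (D_sym a d), (D_sym b c), (D_sym b d) in *.
  apply (RC (D c a) a b c d v Aab Acd); try lia.
  rewrite (D_sym d v), (D_sym c v). lia.
Qed.

Lemma W_compl a b v : adj a b -> (W b a v <-> ~ W a b v).
Proof. unfold W. intro A. pose proof (bip a b v A). lia. Qed.

Lemma split_eq a b c d : adj a b -> adj c d -> W a b c -> W b a d -> forall v, W a b v <-> W c d v.
Proof.
  intros Aab Acd Hc Hd v. split.
  - apply FT; auto.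
  - intro Hv. apply NNPP; intro N. apply (W_compl a b v Aab) in N.
    apply (FT b a d c (adj_sym _ _ Aab) (adj_sym _ _ Acd) Hd Hc) in N.
    apply (W_compl c d v Acd) in N. contradiction.
Qed.

Definition crossing x y c d := (W x y c /\ W y x d) \/ (W y x c /\ W x y d).

Lemma cross_same x y x' y' c d : adj x y -> adj x' y' -> adj c d ->
  crossing x y c d -> crossing x' y' c d ->
  (forall v, W x y v <-> W x' y' v) \/ (forall v, W x y v <-> W y' x' v).
Proof.
  intros A1 A2 A3 C1 C2.
  assert (K1 : (forall v, W x y v <-> W c d v) \/ (forall v, W x y v <-> W d c v)).
  { destruct C1 as [[P Q]|[P Q]]; [left|right]; apply split_eq; auto. apply adj_sym; auto. }
  assert (K2 : (forall v, W x' y' v <-> W c d v) \/ (forall v, W x' y' v <-> W d c v)).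
  { destruct C2 as [[P Q]|[P Q]]; [left|right]; apply split_eq; auto. apply adj_sym; auto. }
  pose proof (fun v => W_compl c d v A3) as Cc.
  pose proof (fun v => W_compl x' y' v A2) as Cx.
  destruct K1 as [K1|K1], K2 as [K2|K2]; [left|right|right|left]; intro v;
    specialize (K1 v); specialize (K2 v); specialize (Cc v); specialize (Cx v); tauto.
Qed.

Lemma theta_cross a b c d : adj a b -> adj c d -> (theta adj a b c d <-> crossing a b c d).
Proof.
  intros A1 A2. unfold theta, crossing, W.
  pose proof (adj_cases a b c A1). pose proof (adj_cases a b d A1).
  pose proof (adj_cases c d a A2). pose proof (adj_cases c d b A2).
  rewrite (D_sym a c), (D_sym a d), (D_sym b c), (D_sym b d) in *.
  split.
  - intros (p & q & r & s & G1 & G2 & G3 & G4 & N). apply is_dist_D in G1, G2, G3, G4. subst.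
    rewrite (D_sym a c), (D_sym a d), (D_sym b c), (D_sym b d) in *. lia.
  - intro C. exists (D a c), (D b d), (D a d), (D b c). repeat split; try apply D_spec.
    rewrite (D_sym a c), (D_sym a d), (D_sym b c), (D_sym b d) in *. lia.
Qed.


Lemma nbrs_fin (l : list V) : exists l', forall z y, In z l -> adj z y -> In y l'.
Proof.
  induction l as [|z0 l [l' IH]].
  - exists []. simpl; tauto.
  - destruct (lf z0) as [l0 H0]. exists (l0 ++ l'). intros z y [<-|Hz] A; apply in_or_app; eauto.
Qed.

Lemma ball x n : exists l, forall y, D x y <= n -> In y l.
Proof.
  induction n as [|n [l IH]].
  - exists [x]. intros y H. assert (D x y = 0) as E by lia. apply D_eq0 in E; subst. left; auto.
  - destruct (nbrs_fin l) as [l' H']. exists (l ++ l'). intros y Hy. apply in_or_app.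
    destruct (le_lt_dec (D x y) n) as [Hle|Hlt]; [left; auto|right].
    assert (E : D y x = S n) by (rewrite D_sym; lia).
    destruct (D_step _ _ _ E) as [z [A Ez]]. apply (H' z y); [apply IH; rewrite D_sym; lia| apply adj_sym; auto].
Qed.

Lemma gmul_inv_r g : gmul G g (ginv G g) = gone G.
Proof.
  set (h := ginv G g).
  rewrite <- (gmul1 G (gmul G g h)).
  rewrite <- (gmulV G h) at 1.
  rewrite <- gmulA. rewrite (gmulA G h g h). unfold h at 2. rewrite gmulV, gmul1. apply gmulV.
Qed.

Definition psi := act phi.
Definition psi' := act (ginv G phi).
Definition P n := Nat.iter n psi.
Definition Q n := Nat.iter n psi'.

Lemma psi'psi v : psi' (psi v) = v.
Proof. unfold psi, psi'. rewrite <- act_mul, gmulV, act_id. auto. Qed.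
Lemma psipsi' v : psi (psi' v) = v.
Proof. unfold psi, psi'. rewrite <- act_mul, gmul_inv_r, act_id. auto. Qed.

Lemma QP n v : Q n (P n v) = v.
Proof.
  induction n as [|n IH]; [reflexivity|]. unfold Q, P in *.
  rewrite Nat.iter_succ_r. simpl. rewrite psi'psi. apply IH.
Qed.
Lemma PQ n v : P n (Q n v) = v.
Proof.
  induction n as [|n IH]; [reflexivity|]. unfold Q, P in *.
  rewrite Nat.iter_succ_r. simpl. rewrite psipsi'. apply IH.
Qed.

Lemma act_walk g x y n : walk adj x y n -> walk adj (act g x) (act g y) n.
Proof.
  induction 1 as [x|x y' z' n A W IH]; [constructor|]. eapply walkS; [apply act_adj; exact A| exact IH].
Qed.
Lemma D_act g x y : D (act g x) (act g y) = D x y.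
Proof.
  pose proof (D_min _ _ _ (act_walk g _ _ _ (D_walk x y))).
  pose proof (D_min _ _ _ (act_walk (ginv G g) _ _ _ (D_walk (act g x) (act g y)))).
  rewrite <- !act_mul, gmulV, !act_id in H0. lia.
Qed.
Lemma D_P n x y : D (P n x) (P n y) = D x y.
Proof. induction n; [reflexivity|]. simpl. unfold psi. rewrite D_act. auto. Qed.
Lemma D_Q n x y : D (Q n x) (Q n y) = D x y.
Proof. induction n; [reflexivity|]. simpl. unfold psi'. rewrite D_act. auto. Qed.
Lemma adj_P n x y : adj x y -> adj (P n x) (P n y).
Proof. induction n; [auto|]. intro A. simpl. apply act_adj. auto. Qed.
Lemma adj_Q n x y : adj x y -> adj (Q n x) (Q n y).
Proof. induction n; [auto|]. intro A. simpl. apply act_adj. auto. Qed.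

Lemma act_iter g n v : act (gpow G g n) v = Nat.iter n (act g) v.
Proof. induction n; simpl; [apply act_id|]. rewrite act_mul, IHn. auto. Qed.

Lemma phi_ne : phi <> gone G.
Proof. destruct HQ as [H _]. exact H. Qed.

Lemma P_nofix n v : 0 < n -> P n v = v -> False.
Proof.
  intros Hn E. apply phi_ne. apply (tfree phi n Hn). apply (act_free _ v).
  rewrite act_iter. exact E.
Qed.

Lemma P_inj n x y : P n x = P n y -> x = y.
Proof. intro E. rewrite <- (QP n x), <- (QP n y), E. auto. Qed.

Lemma P_split i j v : i <= j -> P j v = P i (P (j - i) v).
Proof. intro H. unfold P. rewrite <- Nat.iter_add. f_equal. lia. Qed.
Lemma Q_split i j v : i <= j -> Q j v = Q i (Q (j - i) v).
Proof. intro H. unfold Q. rewrite <- Nat.iter_add. f_equal. lia. Qed.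

Lemma P_orbit_inj v i j : P i v = P j v -> i = j.
Proof.
  intro E. destruct (lt_eq_lt_dec i j) as [[H|H]|H]; auto; exfalso.
  - rewrite (P_split i j v) in E by lia. apply P_inj in E. apply (P_nofix (j - i) v); auto; lia.
  - rewrite (P_split j i v) in E by lia. apply P_inj in E. apply (P_nofix (i - j) v); auto; lia.
Qed.

Lemma Y_psi y : Y y -> Y (psi y).
Proof. destruct HQ as [_ [_ [_ [H _]]]]. apply H. Qed.
Lemma Y_psi' y : Y y -> Y (psi' y).
Proof.
  destruct HQ as [_ [_ [_ [_ [H _]]]]]. intro Hy. destruct (H y Hy) as [x [Hx E]].
  rewrite <- E. fold psi. rewrite psi'psi. exact Hx.
Qed.
Lemma Y_P n y : Y y -> Y (P n y).
Proof. induction n; simpl; auto. intro; apply Y_psi; auto. Qed.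
Lemma Y_Q n y : Y y -> Y (Q n y).
Proof. induction n; simpl; auto. intro; apply Y_psi'; auto. Qed.

Lemma reps : exists R : list V, forall y, Y y -> exists r n, In r R /\ (y = P n r \/ r = P n y).
Proof. destruct HQ as [_ [_ [_ [_ [_ H]]]]]. exact H. Qed.

Lemma D_orbit x t : D x (P t x) <= t * D x (psi x).
Proof.
  induction t as [|t IH]. { unfold P; simpl; rewrite D_xx; lia. }
  pose proof (D_tri x (P t x) (P (S t) x)).
  assert (E : P (S t) x = P t (psi x)) by (unfold P; rewrite Nat.iter_succ_r; auto).
  rewrite E, D_P in H. rewrite E. simpl. lia.
Qed.
Lemma D_orbit' x t : D x (Q t x) <= t * D x (psi' x).
Proof.
  induction t as [|t IH]. { unfold Q; simpl; rewrite D_xx; lia. }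
  pose proof (D_tri x (Q t x) (Q (S t) x)).
  assert (E : Q (S t) x = Q t (psi' x)) by (unfold Q; rewrite Nat.iter_succ_r; auto).
  rewrite E, D_Q in H. rewrite E. simpl. lia.
Qed.

Lemma W_P t a b v : W (P t a) (P t b) v <-> W a b (Q t v).
Proof. unfold W. rewrite <- (D_Q t v (P t a)), <- (D_Q t v (P t b)), !QP. tauto. Qed.
Lemma W_Q t a b v : W (Q t a) (Q t b) v <-> W a b (P t v).
Proof. unfold W. rewrite <- (D_P t v (Q t a)), <- (D_P t v (Q t b)), !PQ. tauto. Qed.


Lemma P_split' i j v : i <= j -> P j v = P (j - i) (P i v).
Proof. intro H. unfold P. rewrite <- Nat.iter_add. f_equal. lia. Qed.

Lemma halfspace_iff a b v : halfspace adj Y a b v <-> Y v /\ W a b v.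
Proof.
  unfold halfspace, W. split.
  - intros [Hv (p & q & H1 & H2 & Hl)]. apply is_dist_D in H1, H2. subst. auto.
  - intros [Hv Hl]. split; auto. exists (D v a), (D v b). repeat split; try apply D_spec; auto.
Qed.

Lemma hpv_iff a b u : adj a b -> (hp_vertex adj Y a b u <->
  exists c d, Y c /\ Y d /\ adj c d /\ crossing a b c d /\ (u = c \/ u = d)).
Proof.
  intro Hab. unfold hp_vertex. split.
  - intros (c & d & H1 & H2 & H3 & H4 & H5). exists c, d. repeat split; auto. apply theta_cross; auto.
  - intros (c & d & H1 & H2 & H3 & H4 & H5). exists c, d. repeat split; auto. apply theta_cross; auto.
Qed.

Lemma W_ab a b : adj a b -> W a b a.
Proof. intro A. unfold W. rewrite D_xx, (D_adj _ _ A). lia. Qed.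
Lemma nW_ab a b : adj a b -> ~ W a b b.
Proof. intro A. unfold W. rewrite D_xx. lia. Qed.

Lemma hpv_a a b : Y a -> Y b -> adj a b -> hp_vertex adj Y a b a.
Proof.
  intros Ya Yb A. apply hpv_iff; auto. exists a, b. repeat split; auto. left. split.
  apply W_ab; auto. apply W_ab, adj_sym; auto.
Qed.

Lemma hpv_swap a b u : adj a b -> hp_vertex adj Y a b u -> hp_vertex adj Y b a u.
Proof.
  intros A H. apply hpv_iff in H; auto. apply hpv_iff; [apply adj_sym; auto|].
  destruct H as (c & d & H1 & H2 & H3 & H4 & H5). exists c, d. repeat split; auto.
  unfold crossing in *. tauto.
Qed.

Lemma fd_swap a b : adj a b -> finite_diam_hp adj Y a b -> finite_diam_hp adj Y b a.
Proof.
  intros A [n Hn]. exists n. intros u w p Hu Hw Hp. apply (Hn u w p); auto;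
  apply hpv_swap; auto; apply adj_sym; auto.
Qed.

Lemma deep_neg a b : ~ deep_halfspace adj Y a b ->
  exists n, forall v, halfspace adj Y a b v -> exists u, hp_vertex adj Y a b u /\ D v u < n.
Proof.
  intro H. apply NNPP; intro H'. apply H. intro n. apply NNPP; intro Hn. apply H'. exists n.
  intros v Hv. apply NNPP; intro Hu. apply Hn. exists v. split; auto.
  intros u p Hu' Hp. apply is_dist_D in Hp. subst. apply NNPP; intro L. apply Hu. exists u. split; auto. lia.
Qed.

Section Edge.
Context (a b : V) (Ya : Y a) (Yb : Y b) (Hab : adj a b).

Lemma C2 : finite_diam_hp adj Y a b -> ~ deep_halfspace adj Y a b -> compact_halfspace adj Y a b.
Proof.
  intros [M HM] Hd. destruct (deep_neg a b Hd) as [n Hn].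
  destruct (ball a (M + n)) as [l Hl]. exists l. intros v Hv. apply Hl.
  destruct (Hn v Hv) as [u [Hu Hvu]].
  pose proof (HM u a (D u a) Hu (hpv_a a b Ya Yb Hab) (D_spec u a)).
  pose proof (D_tri a u v). rewrite (D_sym a u), (D_sym u v) in *. lia.
Qed.

Lemma C3 : compact_halfspace adj Y a b -> ~ deep_halfspace adj Y a b.
Proof.
  intros [l Hl] Hd. destruct (Hd (S (fold_right (fun v acc => D v a + acc) 0 l))) as [v [Hv Hfar]].
  pose proof (sum_bound (fun v => D v a) l v (Hl v Hv)) as B. simpl in B.
  pose proof (Hfar a (D v a) (hpv_a a b Ya Yb Hab) (D_spec v a)). lia.
Qed.

Lemma C5 : finite_diam_hp adj Y a b -> ~ deep_halfspace adj Y a b -> ~ deep_halfspace adj Y b a -> False.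
Proof.
  intros Hf H1 H2.
  destruct (C2 Hf H1) as [l1 L1].
  assert (Hba : compact_halfspace adj Y b a).
  { destruct (fd_swap a b Hab Hf) as [M HM].
    destruct (deep_neg b a H2) as [n Hn].
    destruct (ball b (M + n)) as [l Hl]. exists l. intros v Hv. apply Hl.
    destruct (Hn v Hv) as [u [Hu Hvu]].
    pose proof (HM u b (D u b) Hu (hpv_a b a Yb Ya (adj_sym _ _ Hab)) (D_spec u b)).
    pose proof (D_tri b u v). rewrite (D_sym b u), (D_sym u v) in *. lia. }
  destruct Hba as [l2 L2].
  apply (pigeon_inj (fun k => P k a) (l1 ++ l2)).
  - intros i j E. apply (P_orbit_inj a i j E).
  - intro k. apply in_or_app. destruct (classic (W a b (P k a))) as [Hw|Hw].
    + left. apply L1. apply halfspace_iff. split; auto. apply Y_P; auto.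
    + right. apply L2. apply halfspace_iff. split; [apply Y_P; auto|]. apply W_compl; auto.
Qed.

Lemma unb : ~ finite_diam_hp adj Y a b -> forall n, exists u, hp_vertex adj Y a b u /\ n <= D a u.
Proof.
  intros H n. apply NNPP; intro H'. apply H. exists (n + n).
  intros u w p Hu Hw Hp. apply is_dist_D in Hp. subst.
  assert (D a u < n) by (apply NNPP; intro; apply H'; exists u; split; auto; lia).
  assert (D a w < n) by (apply NNPP; intro; apply H'; exists w; split; auto; lia).
  pose proof (D_tri u a w). rewrite (D_sym u a) in *. lia.
Qed.

Lemma hpv_transport (f : V -> V) : (forall v, W a b (f v) <-> W a b v) ->
  (forall y, Y y -> Y (f y)) -> (forall x y, adj x y -> adj (f x) (f y)) -> hp_vertex adj Y a b (f a).
Proof.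
  intros Hw HY Ha. apply hpv_iff; auto. exists (f a), (f b). repeat split; auto.
  left. split.
  - apply Hw, W_ab; auto.
  - apply W_compl; auto. rewrite Hw. apply nW_ab; auto.
Qed.

Lemma periodic_bound m : 0 < m -> (forall v, W a b (P m v) <-> W a b v) ->
  exists K, forall v, Y v -> exists u, hp_vertex adj Y a b u /\ D v u <= K.
Proof.
  intros Hm Hp.
  assert (Pk : forall k v, W a b (P (m * k) v) <-> W a b v).
  { induction k as [|k IH]; intro v. { rewrite Nat.mul_0_r. reflexivity. }
    replace (m * S k) with (m + m * k) by lia. unfold P at 1. rewrite Nat.iter_add.
    fold (P (m * k) v). rewrite (Hp (P (m * k) v)). apply IH. }
  assert (Qk : forall k v, W a b (Q (m * k) v) <-> W a b v).
  { intros k v. rewrite <- (Pk k (Q (m * k) v)), PQ. reflexivity. }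
  destruct reps as [R HR].
  set (K := fold_right (fun r acc => fold_right (fun s acc2 => D (P s r) a + D (Q s r) a + acc2) 0 (seq 0 m) + acc) 0 R).
  assert (HK : forall r s, In r R -> s < m -> D (P s r) a + D (Q s r) a <= K).
  { intros r s Hr Hs.
    pose proof (sum_bound (fun s => D (P s r) a + D (Q s r) a) (seq 0 m) s) as B1.
    pose proof (sum_bound (fun r => fold_right (fun s acc2 => D (P s r) a + D (Q s r) a + acc2) 0 (seq 0 m)) R r Hr) as B2.
    simpl in B1, B2. assert (In s (seq 0 m)) by (apply in_seq; lia). specialize (B1 H). unfold K. lia. }
  exists K. intros v Hv. destruct (HR v Hv) as (r & t & Hr & [E|E]).
  - pose proof (Nat.div_mod t m ltac:(lia)) as Dm. set (q := t / m) in *. set (s := t mod m) in *.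
    assert (Hs : s < m) by (apply Nat.mod_upper_bound; lia).
    exists (P (m * q) a). split.
    + apply hpv_transport; auto. intros; apply Y_P; auto. intros; apply adj_P; auto.
    + subst v. rewrite Dm. unfold P at 1. rewrite Nat.iter_add. fold (P s r). fold (P (m * q) (P s r)).
      rewrite D_P. specialize (HK r s Hr Hs). lia.
  - pose proof (Nat.div_mod t m ltac:(lia)) as Dm. set (q := t / m) in *. set (s := t mod m) in *.
    assert (Hs : s < m) by (apply Nat.mod_upper_bound; lia).
    assert (Ev : v = Q t r) by (rewrite E, QP; auto).
    exists (Q (m * q) a). split.
    + apply hpv_transport; auto. intros; apply Y_Q; auto. intros; apply adj_Q; auto.
    + subst v. rewrite Dm. unfold Q at 1. rewrite Nat.iter_add. fold (Q s r). fold (Q (m * q) (Q s r)).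
      rewrite D_Q. specialize (HK r s Hr Hs). lia.
Qed.

Lemma periodic_C1 m : 0 < m -> (forall v, W a b (P m v) <-> W a b v) ->
  ~ deep_halfspace adj Y a b /\ ~ deep_halfspace adj Y b a.
Proof.
  intros Hm Hp. destruct (periodic_bound m Hm Hp) as [K HK]. split.
  - intro Hd. destruct (Hd (S K)) as [v [Hv Hfar]]. apply halfspace_iff in Hv.
    destruct (HK v (proj1 Hv)) as [u [Hu Hvu]]. pose proof (Hfar u _ Hu (D_spec v u)). lia.
  - intro Hd. destruct (Hd (S K)) as [v [Hv Hfar]]. apply halfspace_iff in Hv.
    destruct (HK v (proj1 Hv)) as [u [Hu Hvu]].
    pose proof (Hfar u _ (hpv_swap a b u Hab Hu) (D_spec v u)). lia.
Qed.

Lemma periodic_C4 m : 0 < m -> (forall v, W a b (P m v) <-> W a b v) ->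
  ~ compact_halfspace adj Y a b /\ ~ compact_halfspace adj Y b a.
Proof.
  intros Hm Hp.
  assert (Pk : forall k v, W a b (P (m * k) v) <-> W a b v).
  { induction k as [|k IH]; intro v. { rewrite Nat.mul_0_r. reflexivity. }
    replace (m * S k) with (m + m * k) by lia. unfold P at 1. rewrite Nat.iter_add.
    fold (P (m * k) v). rewrite (Hp (P (m * k) v)). apply IH. }
  assert (Inj : forall x i j, P (m * i) x = P (m * j) x -> i = j).
  { intros x i j E. apply P_orbit_inj in E. nia. }
  split.
  - intros [l Hl]. apply (pigeon_inj (fun k => P (m * k) a) l); [apply Inj|].
    intro k. apply Hl, halfspace_iff. split; [apply Y_P; auto|]. apply Pk, W_ab; auto.
  - intros [l Hl]. apply (pigeon_inj (fun k => P (m * k) b) l); [apply Inj|].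
    intro k. apply Hl, halfspace_iff. split; [apply Y_P; auto|].
    apply W_compl; auto. rewrite Pk. apply nW_ab; auto.
Qed.


Definition T (s : bool) t v := if s then Q t v else P t v.

Lemma anti_double m : (forall w, W a b (P m w) <-> W b a w) -> forall w, W a b (P (m + m) w) <-> W a b w.
Proof.
  intros H w. unfold P at 1. rewrite Nat.iter_add. fold (P m w). fold (P m (P m w)).
  rewrite H. rewrite (W_compl a b _ Hab). rewrite H. rewrite (W_compl a b _ Hab). tauto.
Qed.

Lemma PER : ~ finite_diam_hp adj Y a b -> exists m, 0 < m /\ forall v, W a b (P m v) <-> W a b v.
Proof.
  intro Hnf.
  destruct reps as [R HR].
  set (KR := fold_right (fun r acc => D a r + acc) 0 R).
  set (tau := D a (psi a) + D a (psi' a)).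
  assert (Cfg : forall N, exists p : (bool * V * V) * nat,
    N <= snd p /\ D a (snd (fst (fst p))) <= KR /\ adj (snd (fst (fst p))) (snd (fst p)) /\
    crossing (T (fst (fst (fst p))) (snd p) a) (T (fst (fst (fst p))) (snd p) b) (snd (fst (fst p))) (snd (fst p))).
  { intro N. destruct (unb Hnf (N * tau + KR + 2)) as [u [Hu Hdu]].
    apply hpv_iff in Hu; auto. destruct Hu as (c0 & d0 & Yc & Yd & Acd & Ccd & Eu).
    assert (Hc0 : N * tau + KR + 1 <= D a c0).
    { destruct Eu as [->| ->]; [lia|]. pose proof (D_tri a c0 d0). rewrite (D_adj _ _ Acd) in H. lia. }
    destruct (HR c0 Yc) as (r & t & Hr & [E|E]).
    - exists ((true, r, Q t d0), t). simpl. unfold T.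
      assert (Er : r = Q t c0) by (rewrite E, QP; auto).
      pose proof (sum_bound (fun r => D a r) R r Hr) as B. simpl in B. fold KR in B.
      split; [|split; [lia|split]].
      + pose proof (D_tri a (P t a) c0). rewrite E in H at 2. rewrite E in H. rewrite D_P in H.
        pose proof (D_orbit a t). assert (t * D a (psi a) <= t * tau) by (apply Nat.mul_le_mono_l; unfold tau; lia).
        destruct (le_lt_dec N t) as [Hle|Hlt]; [auto|].
        assert (t * tau <= N * tau) by (apply Nat.mul_le_mono_r; lia). rewrite <- E in H. lia.
      + rewrite Er. apply adj_Q; auto.
      + unfold crossing. rewrite !W_Q, Er, !PQ. exact Ccd.
    - exists ((false, r, P t d0), t). simpl. unfold T.
      assert (Er : c0 = Q t r) by (rewrite E, QP; auto).
      pose proof (sum_bound (fun r => D a r) R r Hr) as B. simpl in B. fold KR in B.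
      split; [|split; [lia|split]].
      + pose proof (D_tri a (Q t a) c0). rewrite Er in H at 2. rewrite D_Q in H.
        pose proof (D_orbit' a t). assert (t * D a (psi' a) <= t * tau) by (apply Nat.mul_le_mono_l; unfold tau; lia).
        destruct (le_lt_dec N t) as [Hle|Hlt]; [auto|].
        assert (t * tau <= N * tau) by (apply Nat.mul_le_mono_r; lia). lia.
      + rewrite E. apply adj_P; auto.
      + unfold crossing. rewrite !W_P, E, !QP. exact Ccd. }
  set (f := fun N => proj1_sig (constructive_indefinite_description _ (Cfg N))).
  assert (Hf : forall N, N <= snd (f N) /\ D a (snd (fst (fst (f N)))) <= KR /\
     adj (snd (fst (fst (f N)))) (snd (fst (f N))) /\
     crossing (T (fst (fst (fst (f N)))) (snd (f N)) a) (T (fst (fst (fst (f N)))) (snd (f N)) b)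
       (snd (fst (fst (f N)))) (snd (fst (f N)))).
  { intro N. unfold f. destruct (constructive_indefinite_description _ _) as [p Hp]. exact Hp. }
  set (q := fun i => Nat.iter i (fun n => S (snd (f n))) 0).
  assert (qS : forall i, q (S i) = S (snd (f (q i)))) by (intro; reflexivity).
  assert (qmono : forall i j, i < j -> snd (f (q i)) < q j).
  { intros i j H. induction H.
    - rewrite qS. lia.
    - rewrite qS. pose proof (proj1 (Hf (q m))). lia. }
  destruct (ball a KR) as [Lc HLc]. destruct (ball a (S KR)) as [Ld HLd].
  destruct (pigeon (fun i => fst (f (q i))) (list_prod (list_prod [true; false] Lc) Ld)) as (i & j & Hij & Eij).
  { intro k. destruct (f (q k)) as [[[s c] d] t] eqn:Ek. cbn [fst].
    pose proof (Hf (q k)) as (H1 & H2 & H3 & H4). rewrite Ek in H1, H2, H3, H4. cbn [fst snd] in H1, H2, H3, H4.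
    apply in_prod_iff. split; [apply in_prod_iff; split|].
    - destruct s; simpl; auto.
    - apply HLc; auto.
    - apply HLd. pose proof (D_tri a c d). rewrite (D_adj _ _ H3) in H. lia. }
  pose proof (qmono i j Hij) as Hlt. pose proof (proj1 (Hf (q j))) as Hj.
  pose proof (Hf (q i)) as (_ & _ & Ai & Ci). pose proof (Hf (q j)) as (_ & _ & Aj & Cj).
  destruct (f (q i)) as [[[si ci] di] ti]. destruct (f (q j)) as [[[sj cj] dj] tj].
  simpl in *. injection Eij as <- <- <-.
  set (m := tj - ti).
  assert (Hm : 0 < m) by (unfold m; lia).
  assert (Key : (forall w, W a b (P m w) <-> W a b w) \/ (forall w, W a b (P m w) <-> W b a w)).
  { destruct si; unfold T in *.
    - destruct (cross_same (Q ti a) (Q ti b) (Q tj a) (Q tj b) ci di) as [K|K]; auto;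
        try (apply adj_Q; auto).
      + left. intro w. specialize (K (Q ti w)). rewrite !W_Q in K. rewrite PQ in K.
        rewrite (P_split' ti tj) in K by lia. rewrite PQ in K. fold m in K. tauto.
      + right. intro w. specialize (K (Q ti w)). rewrite W_Q, W_Q in K. rewrite PQ in K.
        rewrite (P_split' ti tj) in K by lia. rewrite PQ in K. fold m in K.
        rewrite (W_compl a b _ Hab). rewrite (W_compl a b _ Hab) in K. tauto.
    - destruct (cross_same (P ti a) (P ti b) (P tj a) (P tj b) ci di) as [K|K]; auto;
        try (apply adj_P; auto).
      + left. intro w. specialize (K (P tj w)). rewrite !W_P in K. rewrite QP in K.
        rewrite (P_split ti tj) in K by lia. rewrite QP in K. fold m in K. tauto.
      + right. intro w. specialize (K (P tj w)). rewrite W_P, W_P in K. rewrite QP in K.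
        rewrite (P_split ti tj) in K by lia. rewrite QP in K. fold m in K. tauto. }
  destruct Key as [K|K].
  - exists m. auto.
  - exists (m + m). split; [lia|]. apply anti_double; auto.
Qed.

End Edge.

Theorem main (a b : V) (Ya : Y a) (Yb : Y b) (Hab : adj a b) :
  (trivial_hp adj Y a b <-> ~ finite_diam_hp adj Y a b) /\
  (half_essential_hp adj Y a b <->
     (compact_halfspace adj Y a b \/ compact_halfspace adj Y b a)) /\
  (essential_hp adj Y a b <->
     finite_diam_hp adj Y a b /\ ~ compact_halfspace adj Y a b /\
     ~ compact_halfspace adj Y b a).
Proof.
  assert (C1 : ~ finite_diam_hp adj Y a b -> ~ deep_halfspace adj Y a b /\ ~ deep_halfspace adj Y b a).
  { intro H. destruct (PER a b Hab H) as [m [Hm Hp]]. exact (periodic_C1 a b Ya Yb Hab m Hm Hp). }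
  assert (C4 : ~ finite_diam_hp adj Y a b -> ~ compact_halfspace adj Y a b /\ ~ compact_halfspace adj Y b a).
  { intro H. destruct (PER a b Hab H) as [m [Hm Hp]]. exact (periodic_C4 a b Ya Yb Hab m Hm Hp). }
  pose proof (C2 a b Ya Yb Hab) as C2ab. pose proof (C3 a b Ya Yb Hab) as C3ab.
  pose proof (C3 b a Yb Ya (adj_sym _ _ Hab)) as C3ba.
  pose proof (C5 a b Ya Yb Hab) as C5ab.
  pose proof (fun H => C2 b a Yb Ya (adj_sym _ _ Hab) (fd_swap a b Hab H)) as C2ba.
  unfold trivial_hp, half_essential_hp, essential_hp.
  destruct (classic (finite_diam_hp adj Y a b)) as [F|F].
  - destruct (classic (deep_halfspace adj Y a b)) as [D1|D1];
    destruct (classic (deep_halfspace adj Y b a)) as [D2|D2].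
    + split; [tauto|]. split; [|tauto]. split; [tauto|]. intros [C|C]; exfalso; [apply C3ab|apply C3ba]; auto.
    + specialize (C2ba F D2). split; [tauto|]. split; [tauto|]. split; [tauto|]. tauto.
    + specialize (C2ab F D1). split; [tauto|]. split; [tauto|]. tauto.
    + exfalso; eauto.
  - destruct (C1 F) as [N1 N2]. destruct (C4 F) as [N3 N4]. tauto.
Qed.

End S.

Theorem lemma5p5 (V : Type) (adj : V -> V -> Prop) (G : group)
  (act : G -> V -> V) (HX : compact_npc_universal_cover adj G act)
  (Y : V -> Prop) (phi : G) (HQ : quasiline adj G act Y phi)
  (a b : V) (Ya : Y a) (Yb : Y b) (Hab : adj a b) :
  (trivial_hp adj Y a b <-> ~ finite_diam_hp adj Y a b) /\
  (half_essential_hp adj Y a b <->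
     (compact_halfspace adj Y a b \/ compact_halfspace adj Y b a)) /\
  (essential_hp adj Y a b <->
     finite_diam_hp adj Y a b /\ ~ compact_halfspace adj Y a b /\
     ~ compact_halfspace adj Y b a).
Proof. exact (main adj G act HX Y phi HQ a b Ya Yb Hab). Qed.
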